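(* Let $\mathcal H$ be a real Hilbert space and $\hat H\colon\operatorname{dom}(\hat H)\subset\mathcal H\to\mathcal H$ a densely defined self-adjoint linear operator. Let $\psi\in\operatorname{dom}(\hat H)\setminus\{0\}$ (not necessarily normalized) and let \[ d=\frac{2}{\|\psi\|}\big[\hat H\psi-E(\psi)\psi\big] \] be the $L^2$ gradient of $E$ on the unit sphere at $\psi/\|\psi\|$. Assume $d\neq0$ and $d\in\operatorname{dom}(\hat H)$. Then the optimal step size \[ \eta^*=\operatorname{argmin}_{\eta>0}E(\psi-\eta d) \] is given by \[ \eta^*=\frac{\|\psi\|}{E(d)-E(\psi)+\sqrt{(E(d)-E(\psi))^2+\|d\|^2}}. \]
   Context: For $\phi\in\operatorname{dom}(\hat H)\setminus\{0\}$ the energy (Rayleigh quotient) is $E(\phi)=\langle\phi,\hat H\phi\rangle/\langle\phi,\phi\rangle$, and $\|\cdot\|$ is the norm of $\mathcal H$. *)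

(* Defs.v *)
From HB Require Import structures.
From mathcomp Require Import all_boot all_order all_algebra.
From mathcomp Require Import reals.
Set Implicit Arguments. Unset Strict Implicit. Unset Printing Implicit Defensive.
Import Order.TTheory GRing.Theory Num.Theory.
Local Open Scope ring_scope.

Section Hilbert.
Variables (R : realType) (V : lmodType R).

Definition ipnorm (inner : V -> V -> R) (x : V) : R := Num.sqrt (inner x x).

Definition is_inner_product (inner : V -> V -> R) : Prop :=
  [/\ (forall x y, inner x y = inner y x),
      (forall a x y z, inner (a *: x + y) z = a * inner x z + inner y z),
      (forall x, 0 <= inner x x) &
      (forall x, inner x x = 0 -> x = 0)].

Definition ip_complete (inner : V -> V -> R) : Prop :=
  forall u : nat -> V,
    (forall e : R, 0 < e -> exists N, forall m n, (N <= m)%N -> (N <= n)%N ->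
        ipnorm inner (u m - u n) < e) ->
    exists l : V, forall e : R, 0 < e -> exists N, forall n, (N <= n)%N ->
        ipnorm inner (u n - l) < e.

Definition is_hilbert (inner : V -> V -> R) : Prop :=
  is_inner_product inner /\ ip_complete inner.

Definition is_subspace (D : V -> Prop) : Prop :=
  [/\ D 0, (forall x y, D x -> D y -> D (x + y)) &
      (forall (a : R) x, D x -> D (a *: x))].

Definition is_dense (inner : V -> V -> R) (D : V -> Prop) : Prop :=
  forall x e, 0 < e -> exists y, D y /\ ipnorm inner (x - y) < e.

Definition linear_on (D : V -> Prop) (H : V -> V) : Prop :=
  forall (a : R) x y, D x -> D y -> H (a *: x + y) = a *: H x + H y.

(* A densely defined linear operator (D, H) is self-adjoint: its adjoint
   (y in dom(H^* ) with H^* y = z iff <H x, y> = <x, z> for all x in D)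
   has the same domain and agrees with H. *)
Definition self_adjoint (inner : V -> V -> R) (D : V -> Prop) (H : V -> V) : Prop :=
  forall y z, (forall x, D x -> inner (H x) y = inner x z) <-> (D y /\ z = H y).

Definition energy (inner : V -> V -> R) (H : V -> V) (phi : V) : R :=
  inner phi (H phi) / inner phi phi.

Definition is_argmin_pos (f : R -> R) (eta : R) : Prop :=
  0 < eta /\ forall eta', 0 < eta' -> f eta <= f eta'.

End Hilbert.

(* Main.v *)
From HB Require Import structures.
From mathcomp Require Import all_boot all_order all_algebra.
From mathcomp Require Import reals ring lra.
Require Import Defs.
Import Order.TTheory GRing.Theory Num.Theory.
Local Open Scope ring_scope.

Lemma real_part (R : realType) (n m E G : R) (f : R -> R) :
  0 < n -> 0 < m ->
  (forall t, f t = (E * n^+2 - t * n * m + t^+2 * G * m) / (n^+2 + t^+2 * m)) ->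
  forall eta : R,
  (0 < eta /\ forall eta', 0 < eta' -> f eta <= f eta') <->
  eta = n / ((G - E) + Num.sqrt ((G - E) ^+ 2 + m)).
Proof.
move=> n0 m0 hf eta.
set g := G - E. set s := Num.sqrt _.
have s0 : 0 <= s by apply: sqrtr_ge0.
have s2 : s ^+ 2 = g ^+ 2 + m by rewrite sqr_sqrtr // addr_ge0 ?sqr_ge0 ?ltW.
have gs : 0 < g + s by nra.
set ts := n / (g + s).
have ts0 : 0 < ts by rewrite divr_gt0.
have den t : 0 < n^+2 + t^+2 * m by nra.
have key t : f t = E + (g - s) / 2 + (m * (g + s) / 2) * ((t - ts)^+2 / (n^+2 + t^+2 * m)).
  rewrite hf /ts.
  have hm : m = s^+2 - g^+2 by lra.
  have hG : G = g + E by rewrite /g; ring.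
  rewrite hG.
  have d0 := den t. rewrite hm in d0 *.
  field. by rewrite gt_eqF // lt0r_neq0 ?gs.
have K0 : 0 < m * (g + s) / 2 by rewrite divr_gt0 // mulr_gt0.
split.
- case=> e0 hmin.
  have := hmin ts ts0. rewrite !key subrr expr0n /= mul0r mulr0 addr0.
  move=> h0.
  have : m * (g + s) / 2 * ((eta - ts) ^+ 2 / (n ^+ 2 + eta ^+ 2 * m)) <= 0 by lra.
  rewrite pmulr_rle0 // => h.
  have hd := den eta.
  have : (eta - ts) ^+ 2 <= 0.
    by move: h; rewrite ler_pdivrMr // mul0r.
  move=> h2. apply/eqP; rewrite -subr_eq0 -sqrf_eq0; apply/eqP.
  by apply: le_anti; rewrite h2 sqr_ge0.
- move=> ->; split=> // t' _.
  rewrite !key subrr expr0n /= mul0r mulr0 addr0.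
  rewrite lerDl.
  apply: mulr_ge0; first exact: ltW.
  by apply: divr_ge0; [exact: sqr_ge0 | exact: ltW].
Qed.

Lemma innerL (R : realType) (V : lmodType R) (inner : V -> V -> R) :
  is_inner_product inner ->
  [/\ (forall z, inner 0 z = 0),
      (forall x y z, inner (x + y) z = inner x z + inner y z),
      (forall a x z, inner (a *: x) z = a * inner x z),
      (forall x y z, inner x (y + z) = inner x y + inner x z) &
      (forall a x z, inner x (a *: z) = a * inner x z)].
Proof.
case=> hs hl _ _.
have h0 z : inner 0 z = 0.
  have := hl 1 0 0 z; rewrite scale1r addr0 mul1r => h; lra.
have hD x y z : inner (x + y) z = inner x z + inner y z.
  by have := hl 1 x y z; rewrite scale1r mul1r.
have hZ a x z : inner (a *: x) z = a * inner x z.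
  by have := hl a x 0 z; rewrite addr0 h0 addr0.
split=> //.
- by move=> x y z; rewrite hs hD (hs y) (hs z).
- by move=> a x z; rewrite hs hZ hs.
Qed.

Theorem mainTheorem3 (R : realType) (V : lmodType R) (inner : V -> V -> R)
  (D : V -> Prop) (H : V -> V) (psi : V) :
  is_hilbert inner ->
  is_subspace D -> is_dense inner D -> linear_on D H -> self_adjoint inner D H ->
  D psi -> psi <> 0 ->
  let d := (2 / ipnorm inner psi) *: (H psi - energy inner H psi *: psi) in
  d <> 0 -> D d ->
  let gap := energy inner H d - energy inner H psi in
  forall eta : R,
    is_argmin_pos (fun t => energy inner H (psi - t *: d)) eta <->
    eta = ipnorm inner psi /
            (gap + Num.sqrt (gap ^+ 2 + ipnorm inner d ^+ 2)).
Proof.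
move=> [hip _] _ _ hlin hsa Dpsi psi0 d d0 Dd gap eta.
have [h0 hD hZ hDr hZr] := @innerL _ _ _ hip.
have hs : forall x y, inner x y = inner y x by case: hip.
have hpos : forall x, x <> 0 -> 0 < inner x x.
  move=> x x0; case: hip => _ _ hge hdef; rewrite lt0r hge andbT.
  by apply/eqP => /hdef.
set n := ipnorm inner psi.
set E := energy inner H psi.
set m := inner d d.
set G := energy inner H d.
have pp0 := hpos _ psi0.
have m0 : 0 < m := hpos _ d0.
have n0 : 0 < n by rewrite /n /ipnorm sqrtr_gt0.
have n2 : n ^+ 2 = inner psi psi by rewrite /n /ipnorm sqr_sqrtr // ltW.
have dn2 : ipnorm inner d ^+ 2 = m by rewrite /ipnorm sqr_sqrtr // ltW.
have hNl x z : inner (- x) z = - inner x z by rewrite -scaleN1r hZ mulN1r.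
have hNr x z : inner x (- z) = - inner x z by rewrite -scaleN1r hZr mulN1r.
have Hpsi : H psi = (n / 2) *: d + E *: psi.
  have nn0 : n != 0 by rewrite gt_eqF.
  rewrite /d -/n -/E scalerA.
  have -> : n / 2 * (2 / n) = 1 by field; rewrite nn0.
  by rewrite scale1r subrK.
have ipHp : inner psi (H psi) = E * n ^+ 2.
  rewrite /E /energy n2 divfK //; exact: lt0r_neq0.
have ipd : inner psi d = 0.
  have := ipHp; rewrite Hpsi hDr (hZr (n/2) psi d) (hZr E psi psi) -n2 => h.
  have : n / 2 * inner psi d = 0.
    by move/(congr1 (fun x => x - E * n^+2)): h; rewrite addrK subrr.
  by move/eqP; rewrite mulf_eq0 => /orP [|/eqP //]; rewrite mulf_eq0 invr_eq0 pnatr_eq0 orbF gt_eqF.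
have idHp : inner d (H psi) = n / 2 * m.
  by rewrite Hpsi hDr (hZr (n/2) d d) (hZr E d psi) (hs d psi) ipd mulr0 addr0.
have sym : inner (H d) psi = inner d (H psi).
  have [_ h] := hsa psi (H psi); exact: (h (conj Dpsi erefl) d Dd).
have ipHd : inner psi (H d) = n / 2 * m by rewrite hs sym.
have idHd : inner d (H d) = G * m.
  rewrite /G /energy divfK //; exact: lt0r_neq0.
rewrite /is_argmin_pos dn2 /gap -/G -/E.
apply: (@real_part R n m E G) => // t.
rewrite /energy.
clearbody d.
have -> : H (psi - t *: d) = H psi - t *: H d.
  by rewrite addrC -scaleNr hlin // scaleNr addrC.
rewrite !(hD, hDr, hNl, hNr, hZ, hZr) ipHp idHp ipHd idHd ipd (hs d psi) ipd -n2.
rewrite -/m; congr (_ / _); first by field.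
by ring.
Qed.
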